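(* Let $\mathcal{G}$ be an $m$-uniform $k$-regular hypergraph with $n$ vertices, and let $\theta=\binom{n-2}{m-2}/(m-1)$. Then the minimum eigenvalue $\lambda_n$ of $A_{\mathcal{G}}$ satisfies $\lambda_n\ge k-\theta-\binom{n-1}{m-1}$.
   Context: A hypergraph $\mathcal{G}=(V,E)$ has a finite vertex set $V$ and a set $E$ of subsets of $V$ (edges), each of cardinality at least $2$; it is $m$-uniform if every edge has exactly $m$ vertices, and $k$-regular if every vertex lies in exactly $k$ edges. The adjacency matrix $A_{\mathcal{G}}$ has $(A_{\mathcal{G}})_{ij}=\sum_{e\in E,\, i,j\in e}\frac{1}{|e|-1}$ for $i\ne j$ and zero diagonal. *)

(* Defs.v *)
From HB Require Import structures.
From mathcomp Require Import all_boot all_order all_algebra.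
Set Implicit Arguments. Unset Strict Implicit. Unset Printing Implicit Defensive.
Import Order.TTheory GRing.Theory Num.Theory.
Local Open Scope ring_scope.

Definition is_hypergraph (n : nat) (E : {set {set 'I_n}}) : Prop :=
  forall e, e \in E -> (2 <= #|e|)%N.

Definition uniform (n m : nat) (E : {set {set 'I_n}}) : Prop :=
  forall e, e \in E -> #|e| = m.

Definition regular (n k : nat) (E : {set {set 'I_n}}) : Prop :=
  forall v : 'I_n, #|[set e in E | v \in e]| = k.

Definition hadj (R : fieldType) (n : nat) (E : {set {set 'I_n}}) : 'M[R]_n :=
  \matrix_(i, j) (if i != j then
                    \sum_(e in E | (i \in e) && (j \in e)) ((#|e| - 1)%N%:R)^-1
                  else 0).

(* Main.v *)
Require Import Defs.
From HB Require Import structures.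
From mathcomp Require Import all_boot all_order all_algebra zify ring lra.
From mathcomp Require Import all_boot all_order all_algebra.
Set Implicit Arguments. Unset Strict Implicit. Unset Printing Implicit Defensive.
Import Order.TTheory GRing.Theory Num.Theory.
Lemma count_sup (n m : nat) (A : {set 'I_n}) : (#|A| <= m)%N ->
  #|[set S : {set 'I_n} | (#|S| == m) && (A \subset S)]| = 'C(n - #|A|, m - #|A|).
Proof.
move=> Am.
set D := [set S : {set 'I_n} | (#|S| == m) && (A \subset S)].
have -> : 'C(n - #|A|, m - #|A|) = #|[set S : {set 'I_n} | S \subset ~: A & #|S| == m - #|A|]|.
  by rewrite cards_draws; congr (binomial _ _); have h := cardsC A; rewrite card_ord in h; lia.
rewrite -(@card_in_imset _ _ (fun S => S :\: A) D).
  apply: eq_card => S'; apply/imsetP/idP.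
    case=> S; rewrite /D inE => /andP[/eqP hS hAS] ->.
    rewrite inE; apply/andP; split.
      by apply/subsetP => x; rewrite !inE => /andP[].
    by rewrite cardsD (setIidPr hAS) hS.
  rewrite inE => /andP[h1 /eqP h2]; exists (S' :|: A).
    rewrite /D inE subsetUr andbT cardsU h2.
    have -> : S' :&: A = set0.
      apply/setP => x; rewrite !inE; apply/negbTE; apply/negP => /andP[hx hxA].
      by move/subsetP: h1 => /(_ x hx); rewrite inE hxA.
    by rewrite cards0 subn0 subnK.
  apply/setP => x; rewrite !inE; case hx: (x \in A) => /=; rewrite ?orbF //.
  by apply/negbTE/negP => hh; move/subsetP: h1 => /(_ x hh); rewrite inE hx.
move=> S1 S2; rewrite /D !inE => /andP[_ h1] /andP[_ h2] e.
apply/setP => x; case hx: (x \in A).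
  by rewrite (subsetP h1 _ hx) (subsetP h2 _ hx).
by move/setP: e => /(_ x); rewrite !inE hx.
Qed.

Local Open Scope ring_scope.

Lemma sum_ind (R : pzRingType) (T : finType) (F : {set T}) (P : pred T) (c : R) :
  \sum_(S in F) (if P S then c else 0) = c * #|[set S in F | P S]|%:R.
Proof.
rewrite -big_mkcondr /= mulr_natr -sumr_const; apply: eq_bigl => S; by rewrite inE.
Qed.

Section S.
Variables (R : realFieldType) (n : nat) (x : 'I_n -> R).

Definition g (e : {set 'I_n}) : R :=
  \sum_j \sum_i (if (i != j) && (i \in e) && (j \in e) then x i * x j else 0).
Definition h (e : {set 'I_n}) : R := \sum_j (if j \in e then x j ^+ 2 else 0).

Lemma sum_g (F : {set {set 'I_n}}) :
  \sum_(S in F) g S = \sum_j \sum_i (if i != j then x i * x j *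
     #|[set S in F | [set i; j] \subset S]|%:R else 0).
Proof.
rewrite /g exchange_big /=; apply: eq_bigr => j _.
rewrite exchange_big /=; apply: eq_bigr => i _.
case: (i != j) => /=; last by rewrite big1.
rewrite sum_ind; congr (_ * _%:R); apply: eq_card => S.
by rewrite !inE subUset !sub1set.
Qed.

Lemma sum_h (F : {set {set 'I_n}}) :
  \sum_(S in F) h S = \sum_j x j ^+ 2 * #|[set S in F | j \in S]|%:R.
Proof.
rewrite /h exchange_big /=; apply: eq_bigr => j _.
by rewrite sum_ind.
Qed.

Lemma pairs_ge : \sum_j \sum_i (if i != j then x i * x j else 0) >= - \sum_j x j ^+ 2.
Proof.
have -> : \sum_j \sum_i (if i != j then x i * x j else 0) =
   (\sum_i x i) ^+ 2 - \sum_j x j ^+ 2.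
  rewrite expr2 mulr_suml -sumrB; apply: eq_bigr => j _.
  rewrite mulr_sumr [in RHS](bigD1 j) //= addrC expr2 addrK [in RHS]big_mkcond /=.
  by apply: eq_bigr => i _; rewrite mulrC; case: (i != j).
by rewrite -[X in X <= _]add0r lerD2r sqr_ge0.
Qed.

Lemma g_le (S : {set 'I_n}) (m : nat) : #|S| = m -> g S <= (m - 1)%:R * h S.
Proof.
move=> hS.
have key : forall j, \sum_i (if (i != j) && (i \in S) && (j \in S) then x j ^+ 2 else 0)
   = (m - 1)%:R * (if j \in S then x j ^+ 2 else 0).
  move=> j; case hj: (j \in S); last by rewrite mulr0 big1 // => i _; rewrite andbF.
  have -> : \sum_i (if (i != j) && (i \in S) && true then x j ^+ 2 else 0) =
     \sum_(i in S :\ j) x j ^+ 2.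
    rewrite [in RHS]big_mkcond /=; apply: eq_bigr => i _; by rewrite andbT !inE.
  rewrite sumr_const mulr_natl; congr (_ *+ _).
  by move: (cardsD1 j S); rewrite hj hS add1n => ->; rewrite subn1.
have -> : (m - 1)%:R * h S = 2^-1 * (\sum_j \sum_i
     (if (i != j) && (i \in S) && (j \in S) then x j ^+ 2 else 0) +
     \sum_j \sum_i (if (i != j) && (i \in S) && (j \in S) then x i ^+ 2 else 0)).
  have -> : \sum_j \sum_i (if (i != j) && (i \in S) && (j \in S) then x i ^+ 2 else 0)
     = \sum_j \sum_i (if (i != j) && (i \in S) && (j \in S) then x j ^+ 2 else 0).
    rewrite exchange_big /=; apply: eq_bigr => j _; apply: eq_bigr => i _.
    by rewrite eq_sym; case: (i \in S); case: (j \in S); rewrite ?andbF ?andbT.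
  under eq_bigr do rewrite key.
  by rewrite -mulr_sumr /h; field.
set a := \sum_j _; set b := \sum_j _.
suff H : g S *+ 2 <= a + b by rewrite mulr2n in H; lra.
rewrite /a /b /g -big_split -sumrMnl; apply: ler_sum => j _.
rewrite -big_split -sumrMnl; apply: ler_sum => i _.
case: ifP => _ /=; last by rewrite mul0rn addr0.
rewrite mulr2n; have := sqr_ge0 (x i - x j); rewrite sqrrB; lra.
Qed.
End S.

Theorem proposition1 (R : rcfType) (n m k : nat) (E : {set {set 'I_n}}) :
  is_hypergraph E -> (2 <= m)%N -> uniform m E -> regular k E ->
  let theta : R := 'C(n - 2, m - 2)%:R / (m - 1)%:R in
  forall lambda : R, eigenvalue (hadj R E) lambda ->
    k%:R - theta - 'C(n - 1, m - 1)%:R <= lambda.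
Proof.
move=> hyp m2 unif reg theta lambda /eigenvalueP [v hv vnz].
pose x : 'I_n -> R := fun j => v 0 j.
set Q := \sum_j x j ^+ 2.
set M : R := (m - 1)%:R.
have MP : 0 < M by rewrite /M ltr0n; lia.
have QP : 0 < Q.
  rewrite lt_def sumr_ge0 ?andbT; last by move=> j _; exact: sqr_ge0.
  apply/negP => /eqP /psumr_eq0P H; apply/negP: vnz; rewrite negbK.
  apply/eqP/rowP => j; rewrite mxE.
  have /eqP := H (fun i _ => sqr_ge0 _) j isT; by rewrite sqrf_eq0 => /eqP.
have HA : forall j, \sum_i x i * hadj R E i j = lambda * x j.
  by move=> j; move/rowP: hv => /(_ j); rewrite !mxE.
have H1 : lambda * Q * M = \sum_(S in E) g x S.
  rewrite sum_g /Q mulr_sumr mulr_suml; apply: eq_bigr => j _.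
  rewrite expr2 mulrA -HA mulr_suml mulr_suml; apply: eq_bigr => i _.
  rewrite /hadj mxE; case: (i != j) => /=; last by rewrite mulr0 !mul0r.
  have -> : \sum_(e in E | (i \in e) && (j \in e)) ((#|e| - 1)%:R)^-1 =
            \sum_(e in E) (if (i \in e) && (j \in e) then M^-1 else 0 : R).
    rewrite big_mkcondr /=; apply: eq_bigr => e eE.
    by rewrite (unif e eE).
  rewrite sum_ind.
  have -> : #|[set S in E | (i \in S) && (j \in S)]| = #|[set S in E | [set i; j] \subset S]|.
    by apply: eq_card => S; rewrite !inE subUset !sub1set.
  rewrite /M; field; rewrite pnatr_eq0; lia.
set U := [set S : {set 'I_n} | #|S| == m].
have EU : E \subset U.
  by apply/subsetP => e eE; rewrite inE (unif e eE).
have UE : U :&: E = E by apply/setIidPr.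
have H2 : \sum_(S in U) g x S = \sum_(S in E) g x S + \sum_(S in U :\: E) g x S.
  by rewrite (big_setID E) UE.
have H3 : - ('C(n - 2, m - 2)%:R * Q) <= \sum_(S in U) g x S.
  rewrite sum_g.
  have -> : \sum_j \sum_i (if i != j then x i * x j *
     #|[set S in U | [set i; j] \subset S]|%:R else 0) =
     'C(n - 2, m - 2)%:R * \sum_j \sum_i (if i != j then x i * x j else 0 : R).
    rewrite mulr_sumr; apply: eq_bigr => j _; rewrite mulr_sumr; apply: eq_bigr => i _.
    case: ifP => hij; last by rewrite mulr0.
    have -> : #|[set S in U | [set i; j] \subset S]| = 'C(n - 2, m - 2).
      have c2 : #|[set i; j]| = 2%N by rewrite cards2 hij.
      rewrite -c2 -count_sup; last by rewrite c2.
      by apply: eq_card => S; rewrite !inE.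
    by rewrite mulrC.
  rewrite -mulrN; apply: ler_wpM2l; [exact: ler0n | exact: pairs_ge].
have H4 : \sum_(S in U :\: E) g x S <= M * \sum_(S in U :\: E) h x S.
  rewrite mulr_sumr; apply: ler_sum => S; rewrite !inE => /andP[_ /eqP hS].
  exact: g_le.
have H5 : \sum_(S in U :\: E) h x S = 'C(n - 1, m - 1)%:R * Q - k%:R * Q.
  have hU := big_setID (aop := +%R) (idx := 0) (A := U) E (h x); rewrite UE in hU.
  have hUs : \sum_(S in U) h x S = 'C(n - 1, m - 1)%:R * Q.
    rewrite sum_h /Q mulr_sumr; apply: eq_bigr => j _.
    have -> : #|[set S in U | j \in S]| = 'C(n - 1, m - 1).
      have c1 : #|[set j]| = 1%N by rewrite cards1.
      rewrite -c1 -count_sup; last by rewrite c1; lia.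
      by apply: eq_card => S; rewrite !inE sub1set.
    by rewrite mulrC.
  have hEs : \sum_(S in E) h x S = k%:R * Q.
    rewrite sum_h /Q mulr_sumr; apply: eq_bigr => j _.
    by rewrite reg mulrC.
  rewrite hUs hEs in hU; by rewrite hU addrC addKr.
rewrite /theta -(ler_pM2r (mulr_gt0 QP MP)).
have -> : (k%:R - 'C(n - 2, m - 2)%:R / M - 'C(n - 1, m - 1)%:R) * (Q * M) =
  M * (k%:R * Q) - 'C(n - 2, m - 2)%:R * Q - M * ('C(n - 1, m - 1)%:R * Q).
  by field; rewrite lt0r_neq0.
rewrite mulrA.
rewrite H5 mulrBr in H4.
lra.
Qed.
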